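(* Let $Q$ be a weakly compact convex subset of a Banach space $U$. Let $r>0$, $\beta\in[0,1)$, and let $\{\beta_n\}_n$ be a sequence of real numbers with $\beta_n\to\beta$. Suppose $T:Q\to Q$ satisfies: for all $p,q\in Q$ and $n\geq 1$, $\|p-q\|<r$ implies $\|T^np-T^nq\|\leq\beta_n\|p-q\|$. If there exists $q_0\in Q$ such that the asymptotic radius of $\{T^nq_0\}_n$ relative to $Q$ is less than $r$, then $T$ has a unique fixed point.
   Context: A map as in the statement is called a uniformly asymptotic local contraction. For a bounded sequence $\{x_n\}_n$ in $U$, its asymptotic radius relative to $Q$ is $\inf_{y\in Q}\limsup_{n\to\infty}\|x_n-y\|$. *)

(* Defs.v *)
From HB Require Import structures.
From mathcomp Require Import all_boot all_order all_algebra.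
From mathcomp Require Import all_classical all_reals all_analysis.
Set Implicit Arguments. Unset Strict Implicit. Unset Printing Implicit Defensive.
Import Order.TTheory GRing.Theory Num.Theory.
Import numFieldNormedType.Exports.
Local Open Scope classical_set_scope.
Local Open Scope ring_scope.

Definition dual_functional (R : realType) (U : normedModType R) (f : U -> R) :=
  (forall (a : R) (x y : U), f (a *: x + y) = a * f x + f y) /\ continuous f.

Definition weakly_open (R : realType) (U : normedModType R) (W : set U) :=
  forall x, W x -> exists (n : nat) (fs : 'I_n -> U -> R) (e : R),
    [/\ forall i, dual_functional (fs i), 0 < e &
        [set y | forall i, `|fs i y - fs i x| < e] `<=` W].

Definition weakly_compact (R : realType) (U : normedModType R) (Q : set U) :=
  forall C : set (set U), (forall W, C W -> weakly_open W) ->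
    Q `<=` \bigcup_(W in C) W ->
    exists (n : nat) (Ws : 'I_n -> set U), (forall i, C (Ws i)) /\
      Q `<=` \bigcup_i Ws i.

Definition convex_subset (R : realType) (U : lmodType R) (Q : set U) :=
  forall x y (t : R), Q x -> Q y -> 0 <= t -> t <= 1 ->
    Q (t *: x + (1 - t) *: y).

Definition asymptotic_radius (R : realType) (U : normedModType R)
    (Q : set U) (x : nat -> U) : \bar R :=
  ereal_inf [set limn_esup (fun n => (`|x n - y|)%:E) | y in Q].

(* Main.v *)
Require Import Defs.
From HB Require Import structures.
From mathcomp Require Import all_boot all_order all_algebra.
From mathcomp Require Import all_classical all_reals all_analysis.
From mathcomp Require Import lra zify.
Import Order.TTheory GRing.Theory Num.Theory.
Import numFieldNormedType.Exports.
Local Open Scope classical_set_scope.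
Local Open Scope ring_scope.

Section HBSec.
Variables (R : realType) (U : normedModType R).

Definition goodG (G : set (U * R)) :=
  [/\ (forall x a y b, G (x, a) -> G (y, b) -> G (x + y, a + b)),
      (forall t x a, G (x, a) -> G (t *: x, t * a)),
      (forall x a b, G (x, a) -> G (x, b) -> a = b) &
      (forall x a, G (x, a) -> a <= `|x|)].

Lemma goodG_two (G : set (U * R)) :
  (forall p q, G p -> G q -> exists S, [/\ goodG S, S `<=` G, S p & S q]) ->
  goodG G.
Proof.
move=> H; split.
- move=> x a y b Gx Gy; have [S [[S1 _ _ _] SG Sx Sy]] := H _ _ Gx Gy.
  exact/SG/S1.
- move=> t x a Gx; have [S [[_ S2 _ _] SG Sx _]] := H _ _ Gx Gx.
  exact/SG/S2.
- move=> x a b Gx Gy; have [S [[_ _ S3 _] SG Sx Sy]] := H _ _ Gx Gy.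
  exact: S3 Sx Sy.
- move=> x a Gx; have [S [[_ _ _ S4] SG Sx _]] := H _ _ Gx Gx.
  exact: S4 Sx.
Qed.

Lemma goodG0 (G : set (U * R)) : goodG G -> G !=set0 -> G (0, 0).
Proof.
move=> [_ S2 _ _] [[x a] Gx]; have := S2 0 _ _ Gx.
by rewrite scale0r mul0r.
Qed.

Lemma goodG_ext (G : set (U * R)) y : goodG G -> G (0, 0) ->
  (forall a, ~ G (y, a)) ->
  exists G', [/\ goodG G', G `<=` G' & ~ G' `<=` G].
Proof.
move=> [G1 G2 G3 G4] G00 Gy.
pose L := [set z | exists x a, G (x, a) /\ z = a - `|x - y|].
have key x a x' a' : G (x, a) -> G (x', a') -> a - `|x - y| <= `|x' + y| - a'.
  move=> Gx Gx'; have h1 := G4 _ _ (G1 _ _ _ _ Gx Gx').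
  have h2 := ler_normD (x - y) (x' + y).
  have e : x - y + (x' + y) = x + x' by rewrite addrCA subrK addrC.
  rewrite e in h2; lra.
have L0 : L !=set0 by exists (0 - `|0 - y|); exists 0, 0.
have Lub : has_ubound L.
  by exists (`|0 + y| - 0) => _ [x [a [Gx ->]]]; apply: key Gx G00.
pose c := sup L.
have cge x a : G (x, a) -> a - `|x - y| <= c.
  by move=> Gx; apply: ub_le_sup => //; exists x, a.
have cle x a : G (x, a) -> c <= `|x + y| - a.
  by move=> Gx; apply: ge_sup => // _ [x' [a' [Gx' ->]]]; apply: key Gx' Gx.
pose G' := [set p : U * R | exists x a t, G (x, a) /\ p = (x + t *: y, a + t * c)].
exists G'; split.
- split.
  + move=> _ _ _ _ [x1 [a1 [t1 [G1x [-> ->]]]]] [x2 [a2 [t2 [G2x [-> ->]]]]].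
    exists (x1 + x2), (a1 + a2), (t1 + t2); split; first exact: G1.
    by congr (_, _); [rewrite scalerDl addrACA | rewrite mulrDl addrACA].
  + move=> s _ _ [x1 [a1 [t1 [G1x [-> ->]]]]].
    exists (s *: x1), (s * a1), (s * t1); split; first exact: G2.
    by congr (_, _); [rewrite scalerDr scalerA | rewrite mulrDr mulrA].
  + move=> z _ _ [x1 [a1 [t1 [G1x [e1 ->]]]]] [x2 [a2 [t2 [G2x [e2 ->]]]]].
    have [t12|t12] := eqVneq t1 t2.
      subst t2; move: e2; rewrite e1 => /addIr x12; subst x2.
      by rewrite (G3 _ _ _ G1x G2x).
    exfalso; apply: (Gy ((t1 - t2)^-1 * (a2 - a1))).
    have -> : y = (t1 - t2)^-1 *: (x2 - x1).
      apply: (scalerI (a := t1 - t2)); first by rewrite subr_eq0.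
      rewrite scalerA divff ?subr_eq0 // scale1r.
      have e : x1 + t1 *: y = x2 + t2 *: y by rewrite -e1 -e2.
      rewrite scalerBl; apply: (@addIr _ (t2 *: y)); rewrite subrK.
      apply: (@addrI _ x1); rewrite e addrA subrKC //.
    apply: (G2); apply: (G1) => //; have := G2 (-1) _ _ G1x.
    by rewrite scaleN1r mulN1r.
  + move=> _ _ [x [a [t [Gx [-> ->]]]]].
    have [t0|t0|t0] := ltgtP t 0.
    * have s0 : 0 < - t by rewrite oppr_gt0.
      have := cge _ _ (G2 (- t)^-1 _ _ Gx).
      rewrite -[(- t)^-1 *: x - y](@scalerK _ _ (- t)) ?gt_eqF //.
      rewrite scalerBr scalerA divff ?gt_eqF // scale1r scaleNr opprK.
      rewrite normrZ gtr0_norm ?invr_gt0 // -mulrBr => h.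
      have := ler_wpM2l (ltW s0) h; rewrite mulrA divff ?gt_eqF // mul1r.
      rewrite mulNr; lra.
    * have := cle _ _ (G2 t^-1 _ _ Gx).
      rewrite -[t^-1 *: x + y](@scalerK _ _ t) ?gt_eqF //.
      rewrite scalerDr scalerA divff ?gt_eqF // scale1r.
      rewrite normrZ gtr0_norm ?invr_gt0 // -mulrBr => h.
      have := ler_wpM2l (ltW t0) h; rewrite mulrA divff ?gt_eqF // mul1r.
      lra.
    * subst t; rewrite scale0r mul0r !addr0; exact: G4.
- by move=> [x a] Gx; exists x, a, 0; rewrite scale0r mul0r !addr0.
- move=> /(_ (y, c)) H; apply: (Gy c); apply: H.
  by exists 0, 0, 1; rewrite scale1r mul1r !add0r.
Qed.

Lemma hb_point (x0 : U) : x0 != 0 -> exists f : U -> R,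
  [/\ (forall a x y, f (a *: x + y) = a * f x + f y),
      (forall x, `|f x| <= `|x|) & f x0 = `|x0|].
Proof.
move=> x00.
pose G0 := [set p : U * R | exists t, p = (t *: x0, t * `|x0|)].
have G0g : goodG G0.
  split.
  - move=> _ _ _ _ [t1 [-> ->]] [t2 [-> ->]].
    by exists (t1 + t2); rewrite scalerDl mulrDl.
  - move=> s _ _ [t1 [-> ->]]; exists (s * t1); by rewrite scalerA mulrA.
  - move=> _ _ _ [t1 [-> ->]] [t2 [e ->]].
    have : (t1 - t2) *: x0 == 0 by rewrite scalerBl e subrr.
    by rewrite scaler_eq0 (negbTE x00) orbF subr_eq0 => /eqP ->.
  - move=> _ _ [t1 [-> ->]]; rewrite normrZ.
    by apply: ler_wpM2r => //; exact: ler_norm.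
pose P := [set A : set (U * R) | goodG (A `|` G0)].
have [A [PA Amax]] : exists A, P A /\ forall B, A `<` B -> ~ P B.
  apply: Zorn_bigcup => F FP Ftot; rewrite /P /=.
  apply: goodG_two => p q.
  have sub X : F X -> X `|` G0 `<=` (\bigcup_(X in F) X) `|` G0.
    move=> FX z [Xz|G0z]; [left; exists X => // | by right].
  move=> [[X FX Xp]|G0p] [[Y FY Yq]|G0q].
  - have [XY|YX] := Ftot _ _ FX FY.
    + exists (Y `|` G0); split; [exact: FP|exact: sub|left; exact: XY|by left].
    + exists (X `|` G0); split; [exact: FP|exact: sub|by left|left; exact: YX].
  - by exists (X `|` G0); split; [exact: FP|exact: sub|left|right].
  - by exists (Y `|` G0); split; [exact: FP|exact: sub|right|left].
  - exists G0; split => //; by move=> z G0z; right.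
pose G := A `|` G0.
have G0G : G0 `<=` G by move=> z; right.
have Gg : goodG G := PA.
have G00 : G (0, 0).
  by apply: goodG0 => //; exists (0, 0); apply: G0G; exists 0; rewrite scale0r mul0r.
have tot y : exists a, G (y, a).
  apply: contrapT => ny.
  have ny' : forall a, ~ G (y, a) by move=> a Ga; apply: ny; exists a.
  have [G' [G'g GG' nG'G]] := @goodG_ext G y Gg G00 ny'.
  apply: (Amax G').
    split; first by move=> z Az; apply: GG'; left.
    by move=> G'A; apply: nG'G => z /G'A Az; left.
  rewrite /P /= setUidl //; exact: subset_trans GG'.
have [G1 G2 G3 G4] := Gg.
pose f y := xget 0 [set a | G (y, a)].
have fG y : G (y, f y) by exact: (xgetPex 0 (tot y)).
exists f; split.
- move=> a x y; apply: (G3 (a *: x + y)) => //.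
  by apply: G1 => //; apply: G2.
- move=> x; rewrite ler_norml; apply/andP; split; last exact: G4.
  have : G (- x, - f x) by have := G2 (-1) _ _ (fG x); rewrite scaleN1r mulN1r.
  move=> /G4; rewrite normrN; lra.
- apply: (G3 x0) => //; apply: G0G; exists 1; by rewrite scale1r mul1r.
Qed.
End HBSec.

Lemma hb_dual (R : realType) (U : normedModType R) (x0 : U) :
  x0 != 0 -> exists f : U -> R, dual_functional f /\ f x0 != 0.
Proof.
move=> x00; have [f [fl fb fx]] := @hb_point R U x0 x00.
exists f; split; last by rewrite fx normr_eq0.
split => //.
have fB u v : f u - f v = f (u - v).
  by have := fl 1 (u - v) v; rewrite scale1r mul1r subrK => ->; rewrite addrK.
move=> u; apply/cvgrPdist_lt => e e0.
have h := (cvgrPdist_lt (id : U -> U) u).1 (@cvg_id _ (nbhs u)) e e0.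
near=> v; rewrite fB; apply: le_lt_trans (fb _) _.
near: v; apply: h.
Unshelve. all: by end_near.
Qed.

Arguments hb_dual {R U x0}.

Lemma dual_sub (R : realType) (U : normedModType R) (f : U -> R) u v :
  dual_functional f -> f u - f v = f (u - v).
Proof.
move=> [fl _].
by have := fl 1 (u - v) v; rewrite scale1r mul1r subrK => ->; rewrite addrK.
Qed.

Arguments dual_sub {R U f} u v.

Lemma wc_closed (R : realType) (U : normedModType R) (Q : set U)
  (x : nat -> U) (z : U) :
  weakly_compact Q -> (forall n, Q (x n)) -> x @ \oo --> z -> Q z.
Proof.
move=> wQ Qx xz; apply: contrapT => nQz.
pose C := [set W : set U | exists q f, [/\ Q q, dual_functional f,
   f q != f z & W = [set y | `|f y - f q| < `|f q - f z| / 2]]].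
have [n [Ws [CW QW]]] : exists (n : nat) (Ws : 'I_n -> set U),
    (forall i, C (Ws i)) /\ Q `<=` \bigcup_i Ws i.
  apply: wQ.
  - move=> _ [q [f [Qq df fqz ->]]] y /= hy.
    exists 1%N, (fun _ => f), (`|f q - f z| / 2 - `|f y - f q|).
    split => //; first by rewrite subr_gt0.
    move=> w /= /(_ ord0) hw.
    have := ler_normD (f w - f y) (f y - f q).
    rewrite addrA subrK; lra.
  - move=> q Qq.
    have qz : q - z != 0 by apply: contraPneq nQz => /eqP; rewrite subr_eq0 => /eqP <-.
    have [f [df fq]] := hb_dual qz.
    exists [set y | `|f y - f q| < `|f q - f z| / 2].
      exists q, f; split => //.
      by rewrite -subr_eq0 (dual_sub _ _ df).
    rewrite /= subrr normr0 divr_gt0 // normr_gt0 (dual_sub _ _ df) //.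
have ev : \forall m \near \oo, forall i, ~ Ws i (x m).
  apply: filter_forall => i.
  have [q [f [Qq df fqz eW]]] := CW i.
  have fc : (f \o x) @ \oo --> f z := cvg_comp _ _ xz (df.2 z).
  have d0 : 0 < `|f q - f z| / 2 by rewrite divr_gt0 // normr_gt0 subr_eq0.
  have h := (cvgrPdist_lt _ _).1 fc _ d0.
  near=> m; rewrite eW /= => hw.
  have hm : `|f z - (f \o x) m| < `|f q - f z| / 2 by near: m; apply: h.
  rewrite /= in hm.
  have := ler_normD (f q - f (x m)) (f (x m) - f z).
  rewrite addrA subrK distrC in hw *.
  rewrite -normrN opprB in hm. lra.
have [m hm] := filter_ex ev.
have [i _ Wi] := QW _ (Qx m).
exact: hm i Wi.
Unshelve. all: by end_near.
Qed.

Lemma fix_uniq (R : realType) (U : normedModType R) (Q : set U) (r b : R)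
  (T : U -> U) (m : nat) : convex_subset Q -> 0 < r -> b < 1 ->
  (forall p q, Q p -> Q q -> `|p - q| < r ->
     `|iter m T p - iter m T q| <= b * `|p - q|) ->
  forall a a', Q a -> Q a' -> T a = a -> T a' = a' -> a = a'.
Proof.
move=> cQ r0 b1 Tl a a' Qa Qa' Ta Ta'.
pose D := `|a - a'|.
pose k := (Num.truncn (D / r)).+1.
have kpos : (0 < k%:R :> R) by rewrite ltr0n.
have Dk : D / k%:R < r.
  have := truncnS_gt (D / r); rewrite ltr_pdivrMr // => h.
  by rewrite ltr_pdivrMr // mulrC.
pose p (i : nat) := a' + (i%:R / k%:R) *: (a - a').
have Qp i : (i <= k)%N -> Q (p i).
  move=> ik; have := cQ a a' (i%:R / k%:R) Qa Qa'.
  have -> : (i%:R / k%:R) *: a + (1 - i%:R / k%:R) *: a' = p i.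
    by rewrite /p scalerBl scale1r scalerBr addrCA.
  apply; first by rewrite divr_ge0.
  by rewrite ler_pdivrMr // mul1r ler_nat.
have dp i : `|p i - p i.+1| = D / k%:R.
  rewrite /p opprD addrACA subrr add0r -scalerBl.
  rewrite normrZ distrC -mulrBl -natrB // subSnn mul1r ger0_norm ?invr_ge0 ?ler0n //.
  by rewrite mulrC.
have claim i : (i <= k)%N ->
   `|iter m T (p 0%N) - iter m T (p i)| <= b * (i%:R * (D / k%:R)).
  elim: i => [|i IH] ik; first by rewrite subrr normr0 mul0r mulr0.
  have ik' : (i <= k)%N by apply: ltnW.
  have := ler_normD (iter m T (p 0%N) - iter m T (p i)) (iter m T (p i) - iter m T (p i.+1)).
  rewrite addrA subrK => h; apply: (le_trans h).
  have h2 := Tl _ _ (Qp _ ik') (Qp _ ik) (ltac:(by rewrite dp)).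
  rewrite dp in h2; have := IH ik'; rewrite -natr1 mulrDl mul1r mulrDr; lra.
have := claim k (leqnn k).
have -> : p 0%N = a' by rewrite /p mul0r scale0r addr0.
have -> : p k = a by rewrite /p divff ?gt_eqF // scale1r addrC subrK.
rewrite !iter_fix // [_ * (D / _)]mulrC divfK ?gt_eqF // distrC -/D => h.
have D0 : 0 <= D by apply: normr_ge0.
have : D = 0 by nra.
by move/eqP; rewrite normr_eq0 subr_eq0 => /eqP.
Qed.

Theorem mainTheorem6 (R : realType) (U : completeNormedModType R) (Q : set U)
  (r beta : R) (betas : R^nat) (T : U -> U) :
  weakly_compact Q -> convex_subset Q ->
  0 < r -> 0 <= beta -> beta < 1 -> betas @ \oo --> beta ->
  (forall p, Q p -> Q (T p)) ->
  (forall (p q : U) (n : nat), Q p -> Q q -> (1 <= n)%N ->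
     `|p - q| < r -> `|iter n T p - iter n T q| <= betas n * `|p - q|) ->
  (exists2 q0, Q q0 & (asymptotic_radius Q (fun n => iter n T q0) < r%:E)%E) ->
  exists! x, Q x /\ T x = x.
Proof.
move=> wQ cQ r0 b0 b1 bcvg TQ Tlip [q0 Qq0 rad].
pose c := (1 + beta) / 2.
have c0 : 0 <= c by rewrite /c; lra.
have c1 : c < 1 by rewrite /c; lra.
have [m [bm m1]] : exists m, betas m <= c /\ (1 <= m)%N.
  have e0 : 0 < (1 - beta) / 2 by lra.
  have [N _ HN] := (cvgrPdist_lt _ _).1 bcvg _ e0.
  exists N.+1; split => //.
  have := HN N.+1 (leqnSn N); rewrite /c => h.
  have := ler_norm (betas N.+1 - beta); rewrite distrC in h; lra.
have iterQ n w : Q w -> Q (iter n T w).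
  by elim: n => //= n IH Qw; apply: TQ; apply: IH.
pose x n := iter n T q0.
have Qx n : Q (x n) by apply: iterQ.
pose E w rho := exists N, forall n, (N <= n)%N -> `|x n - w| <= rho.
have step w rho : Q w -> rho < r -> E w rho -> E (iter m T w) (c * rho).
  move=> Qw rr [N HN]; exists (N + m)%N => k hk.
  have -> : x k = iter m T (x (k - m)%N).
    by rewrite /x -iterD subnKC //; lia.
  have hkm : (N <= k - m)%N by lia.
  have d := HN _ hkm.
  apply: le_trans (Tlip _ _ _ (Qx _) Qw m1 (le_lt_trans d rr)) _.
  have dn := normr_ge0 (x (k - m)%N - w).
  nra.
have [y Qy [rho [Ey rhor]]] : exists2 y, Q y & exists rho, E y rho /\ rho < r.
  have [_ [y Qy <-] ly] := ereal_inf_lt rad.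
  exists y => //.
  have [_ [V [N _ HV] <-] lV] := ereal_inf_lt ly.
  have hs n : (N <= n)%N -> ((`|x n - y|)%:E <= ereal_sup ((fun n => (`|x n - y|)%:E) @` V))%E.
    by move=> hn; apply: ereal_sup_ubound; exists n => //; apply: HV.
  move: (ereal_sup _) hs lV => s hs lV.
  case: s hs lV => [s| |] hs lV.
  - by exists s; split; [exists N => n hn; rewrite -lee_fin; apply: hs | rewrite -lte_fin].
  - by [].
  - by have := hs N (leqnn N).
have rho0 : 0 <= rho.
  by case: Ey => N HN; apply: le_trans (HN N (leqnn N)).
have iterE j : exists w, Q w /\ E w (c ^+ j * rho).
  elim: j => [|j [w [Qw Ew]]]; first by exists y; rewrite expr0 mul1r.
  exists (iter m T w); split; first exact: iterQ.
  rewrite exprS -mulrA; apply: step => //.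
  have := exprn_ile1 j c0 (ltW c1); have := exprn_ge0 j c0; nra.
have xc : cvg (x @ \oo).
  apply/cauchy_cvgP; apply: cauchy_exP => eps eps0.
  have e1 : 0 < eps / 2 / (rho + 1) by rewrite divr_gt0 // ?divr_gt0 //; lra.
  have cn : `|c| < 1 by rewrite ger0_norm.
  have [N _ HN] := (cvgrPdist_lt _ _).1 (cvg_expr cn) _ e1.
  have hj := HN N (leqnn N).
  have rp : 0 < rho + 1 by lra.
  rewrite sub0r normrN ger0_norm ?exprn_ge0 // ltr_pdivlMr // in hj.
  have [w [Qw [M HM]]] := iterE N.
  exists w; exists M => // n hn /=.
  rewrite -ball_normE /= distrC; apply: le_lt_trans (HM n hn) _.
  have := exprn_ge0 N c0; nra.
pose z := lim (x @ \oo).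
have xz : x @ \oo --> z := xc.
have Qz : Q z := @wc_closed _ _ Q x z wQ Qx xz.
have Tz : T z = z.
  have h1 : [sequence x n.+1]_n @ \oo --> z by rewrite cvg_shiftS.
  have h2 : [sequence x n.+1]_n @ \oo --> T z.
    apply/cvgrPdist_lt => e e0.
    pose K := `|betas 1%N| + 1.
    have K0 : 0 < K by rewrite /K; have := normr_ge0 (betas 1%N); lra.
    have eK : 0 < e / K by rewrite divr_gt0.
    have mK : 0 < Num.min r (e / K) by rewrite lt_min r0 eK.
    have [N _ HN] := (cvgrPdist_lt _ _).1 xz _ mK.
    exists N => // n hn /=.
    have := HN n hn; rewrite lt_min => /andP[hr he].
    have := Tlip z (x n) 1%N Qz (Qx n) (leqnn 1) hr.
    rewrite /= -/(x n.+1) => hT.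
    have KE : K * (e / K) = e by rewrite mulrC divfK ?gt_eqF.
    have g1 : betas 1%N * `|z - x n| <= `|betas 1%N| * `|z - x n|.
      by apply: ler_wpM2r; [exact: normr_ge0 | exact: ler_norm].
    have g2 : `|betas 1%N| * `|z - x n| <= `|betas 1%N| * (e / K).
      by apply: ler_wpM2l; [exact: normr_ge0 | exact: ltW].
    have h3 : `|betas 1%N| * (e / K) < K * (e / K).
      by rewrite ltr_pM2r // /K ltrDl.
    lra.
  exact: cvg_unique h2 h1.
exists z; split => // w [Qw Tw].
apply: (@fix_uniq R U Q r (betas m) T m cQ r0 _ _ z w Qz Qw Tz Tw).
  lra.
by move=> p q Qp Qq; apply: Tlip.
Qed.
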